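(* Let $\Omega$ be a weighted clone. Then $\mathrm{supp}(\Omega)$ is a clone.
   Context: $D$ is a fixed finite set with $|D|\ge2$. A $k$-ary operation is $f:D^k\to D$; $\mathbf{O}^{(k)}_D$ is the set of $k$-ary operations. Projections: $e^{(k)}_i(x_1,\dots,x_k)=x_i$; $\mathbf{J}_D$ is the set of all projections, $\mathbf{J}_D^{(k)}$ the $k$-ary ones. Superposition of operations: $f[g_1,\dots,g_k](\mathbf{x})=f(g_1(\mathbf{x}),\dots,g_k(\mathbf{x}))$. A clone is a set of operations containing all projections and closed under superposition. A $k$-ary weighting is a function $\omega:\mathbf{O}^{(k)}_D\to\mathbb{R}$ with $\sum_f\omega(f)=0$ and $\omega(f)<0$ only if $f$ is a projection. $\mathrm{supp}(\omega)=\mathbf{J}_D^{(k)}\cup\{f:\omega(f)>0\}$, and for a non-empty set $\Omega$ of weightings, $\mathrm{supp}(\Omega)=\mathbf{J}_D\cup\bigcup_{\omega\in\Omega}\mathrm{supp}(\omega)$. For $\omega:\mathbf{O}^{(k)}_D\to\mathbb{R}$ and $\ell$-ary $g_1,\dots,g_k$, the superposition $\omega[g_1,\dots,g_k]:\mathbf{O}^{(\ell)}_D\to\mathbb{R}$ is $\omega[g_1,\dots,g_k](f')=\sum_{f:f[g_1,\dots,g_k]=f'}\omega(f)$; it is proper if it is a weighting. Topology: $k$-ary weightings lie in $\mathbb{R}^{\mathbf{O}^{(k)}_D}$ (Euclidean topology), with disjoint union topology over $k$. A weighted clone is a non-empty set $\Omega$ of weightings closed under scaling by non-negative reals, addition of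 weightings of equal arity, and proper superposition with operations from $\mathrm{supp}(\Omega)$, and topologically closed. *)

(* Defs.v *)
From HB Require Import structures.
From mathcomp Require Import all_boot all_order all_algebra.
From mathcomp Require Import Rstruct.
From Stdlib Require Import Rdefinitions.
Set Implicit Arguments. Unset Strict Implicit. Unset Printing Implicit Defensive.
Import Order.TTheory GRing.Theory Num.Theory.
Local Open Scope ring_scope.

Section WeightedClones.
Variable D : finType.

Definition cube (k : nat) := {ffun 'I_k -> D}.
Definition op (k : nat) := {ffun cube k -> D}.

Definition proj (k : nat) (i : 'I_k) : op k := [ffun x : cube k => x i].
Definition is_proj (k : nat) (f : op k) : Prop := exists i : 'I_k, f = proj i.

Definition superpos (k l : nat) (f : op k) (g : 'I_k -> op l) : op l :=
  [ffun x : cube l => f [ffun i : 'I_k => g i x]].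

Definition opset := forall k : nat, op k -> Prop.

Definition is_clone (C : opset) : Prop :=
  (forall k (i : 'I_k), C k (proj i)) /\
  (forall k l (f : op k) (g : 'I_k -> op l),
      C k f -> (forall i, C l (g i)) -> C l (superpos f g)).

Definition is_weighting (k : nat) (w : op k -> R) : Prop :=
  (\sum_(f : op k) w f = 0) /\ (forall f : op k, w f < 0 -> is_proj f).

Definition wset := forall k : nat, (op k -> R) -> Prop.

Definition supp (W : wset) : opset :=
  fun k f => is_proj f \/ exists w, W k w /\ 0 < w f.

Definition wsuperpos (k l : nat) (w : op k -> R) (g : 'I_k -> op l) : op l -> R :=
  fun f' => \sum_(f : op k | superpos f g == f') w f.

(* topological closedness in the disjoint union of the Euclidean spaces
   R^{O^(k)}: each arity component is closed; written out with the
   (equivalent, finite-dimensional) sup-norm. *)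
Definition wclosed (W : wset) : Prop :=
  forall k (w : op k -> R),
    (forall e : R, 0 < e -> exists w', W k w' /\ forall f, `|w f - w' f| < e) ->
    W k w.

Definition is_weighted_clone (W : wset) : Prop :=
  (exists k w, W k w) /\
  (forall k w, W k w -> is_weighting w) /\
  [/\
      (forall k w (c : R), W k w -> 0 <= c -> W k (fun f => c * w f)),
      (forall k w1 w2, W k w1 -> W k w2 -> W k (fun f => w1 f + w2 f)),
      (forall k l (w : op k -> R) (g : 'I_k -> op l),
          W k w -> (forall i, supp W (g i)) ->
          is_weighting (wsuperpos w g) -> W l (wsuperpos w g))
    & wclosed W].

End WeightedClones.

(* Main.v *)
Require Import Defs.
From mathcomp Require Import all_boot all_order all_algebra.
From mathcomp Require Import Rstruct.
From Stdlib Require Import Rdefinitions.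
From Stdlib Require Import Classical FunctionalExtensionality.
From mathcomp Require Import lra.
Set Implicit Arguments. Unset Strict Implicit. Unset Printing Implicit Defensive.
Import Order.TTheory GRing.Theory Num.Theory.

Section Aux.
Local Open Scope ring_scope.
Variable D : finType.

Lemma superposA k l m (f : op D k) (a : 'I_k -> op D l) (b : 'I_l -> op D m) :
  superpos (superpos f a) b = superpos f (fun i => superpos (a i) b).
Proof.
apply/ffunP => x; rewrite !ffunE; congr (f _); apply/ffunP => i; rewrite !ffunE.
by [].
Qed.

Lemma superpos_proj k l (j : 'I_k) (g : 'I_k -> op D l) :
  superpos (proj D j) g = g j.
Proof. by apply/ffunP => x; rewrite !ffunE. Qed.

Lemma superpos_id k (f : op D k) : superpos f (fun j => proj D j) = f.
Proof.
apply/ffunP => x; rewrite !ffunE; congr (f _); apply/ffunP => i.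
by rewrite !ffunE.
Qed.

Lemma wsuperpos_sum k l (w : op D k -> R) (g : 'I_k -> op D l) :
  \sum_(f' : op D l) wsuperpos w g f' = \sum_(f : op D k) w f.
Proof.
rewrite (partition_big (fun f => superpos f g) xpredT) //=.
Qed.

Lemma wsuperpos_comp k l m (w : op D k -> R) (a : 'I_k -> op D l)
  (b : 'I_l -> op D m) :
  wsuperpos (wsuperpos w a) b = wsuperpos w (fun i => superpos (a i) b).
Proof.
apply: functional_extensionality => f''.
rewrite /wsuperpos.
under [RHS]eq_bigl => f do rewrite -superposA.
rewrite (partition_big (fun f => superpos f a) (fun f' => superpos f' b == f'')) //=.
apply: eq_bigr => f' /eqP Hf'; apply: eq_bigl => f.
case E: (superpos f a == f'); last by rewrite andbF.
by rewrite andbT (eqP E) Hf' eqxx.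
Qed.

Lemma wsuperpos_id k (w : op D k -> R) :
  wsuperpos w (fun j => proj D j) = w.
Proof.
apply: functional_extensionality => f'; rewrite /wsuperpos.
under eq_bigl => f do rewrite superpos_id.
by rewrite big_pred1_eq.
Qed.

Lemma wsuperposL k l (a b : op D k -> R) (c : R) (g : 'I_k -> op D l) :
  wsuperpos (fun x => a x + c * b x) g = fun y => wsuperpos a g y + c * wsuperpos b g y.
Proof.
apply: functional_extensionality => y; rewrite /wsuperpos big_split /=.
by rewrite mulr_sumr.
Qed.

Lemma wsuperposD k l (a b : op D k -> R) (g : 'I_k -> op D l) :
  wsuperpos (fun x => a x + b x) g = fun y => wsuperpos a g y + wsuperpos b g y.
Proof.
apply: functional_extensionality => y; rewrite /wsuperpos big_split /=. by [].
Qed.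

Lemma wsuperpos0 k l (g : 'I_k -> op D l) :
  wsuperpos (fun _ : op D k => 0) g = fun _ => 0.
Proof. apply: functional_extensionality => y; by rewrite /wsuperpos big1. Qed.

Lemma weight_nonneg k (w : op D k -> R) (f : op D k) :
  is_weighting w -> ~ is_proj f -> 0 <= w f.
Proof.
move=> [_ Hn] Hf; case: (lerP 0 (w f)) => // /Hn; tauto.
Qed.

Lemma term_nonneg k l (w : op D k -> R) (g : 'I_k -> op D l) y :
  is_weighting w -> (forall j, y <> g j) ->
  forall f0, superpos f0 g = y -> 0 <= w f0.
Proof.
move=> Hw Hy f0 Hf0; case: (lerP 0 (w f0)) => // Hlt.
have [j Hj] := Hw.2 _ Hlt.
by move: (Hy j); rewrite -Hf0 Hj superpos_proj.
Qed.

Lemma wsuperpos_nonneg k l (w : op D k -> R) (g : 'I_k -> op D l) y :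
  is_weighting w -> (forall j, y <> g j) -> 0 <= wsuperpos w g y.
Proof.
move=> Hw Hy; apply: sumr_ge0 => f0 /eqP; exact: term_nonneg.
Qed.

Lemma wsuperpos_neg k l (w : op D k -> R) (g : 'I_k -> op D l) y :
  is_weighting w -> wsuperpos w g y < 0 -> exists j, y = g j.
Proof.
move=> Hw Hlt; apply: NNPP => Hn.
have Hy : forall j, y <> g j by move=> j E; apply: Hn; exists j.
by move: (wsuperpos_nonneg Hw Hy); rewrite leNgt Hlt.
Qed.

Lemma wsuperpos_lb k l (w : op D k -> R) (g : 'I_k -> op D l) y :
  - (\sum_(f : op D k) `|w f|) <= wsuperpos w g y.
Proof.
have H1 := ler_norm_sum (index_enum (op D k)) w (fun f => superpos f g == y).
have H2 : \sum_(f | superpos f g == y) `|w f| <= \sum_(f : op D k) `|w f|.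
  rewrite big_mkcond /=; apply: ler_sum => f _; case: ifP => _ //.
have H3 : `|wsuperpos w g y| <= \sum_(f : op D k) `|w f|.
  exact: le_trans H1 H2.
by move: H3; rewrite ler_norml => /andP[].
Qed.

Lemma proper_proj k l (w : op D k -> R) (g : 'I_k -> op D l) :
  is_weighting w -> (forall i, is_proj (g i)) -> is_weighting (wsuperpos w g).
Proof.
move=> Hw Hg; split; first by rewrite wsuperpos_sum; exact: Hw.1.
move=> f' /(wsuperpos_neg Hw) [j ->]; exact: Hg.
Qed.

End Aux.

Local Open Scope ring_scope.
Lemma lemma4_aux (D : finType) (W : wset D) :
  is_weighted_clone W -> is_clone (supp W).
Proof.
move=> [_ [Hweight [Hscale Hadd Hsup Hcl]]]; split.
  by move=> k i; left; exists i.
move=> k l f g Hf Hg.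
case: Hf => [[i ->]|[w [Wk wpos]]]; first by rewrite superpos_proj; exact: Hg.
have Hw := Hweight _ _ Wk.
pose lft : 'I_k -> op D (k + l) := fun i => proj D (lshift l i).
pose rgt : 'I_l -> op D (k + l) := fun j => proj D (rshift k j).
pose h : 'I_(k + l) -> op D l :=
  fun m => match split m with inl i => g i | inr j => proj D j end.
have Hlh : (fun i => superpos (lft i) h) = g.
  apply: functional_extensionality => i; rewrite superpos_proj /h.
  by rewrite (unsplitK (inl i)).
have Hrh : (fun j => superpos (rgt j) h) = (fun j => proj D j).
  apply: functional_extensionality => j; rewrite superpos_proj /h.
  by rewrite (unsplitK (inr j)).
pose S := \sum_(f : op D k) `|w f|.
have HS0 : 0 <= S by apply: sumr_ge0 => f0 _; exact: normr_ge0.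
have Wlift : forall m (u : op D m -> R) (a : 'I_m -> op D (k + l)),
    W m u -> (forall i, is_proj (a i)) -> W (k + l) (wsuperpos u a).
  move=> m u a Wu Ha; apply: Hsup => //; first by move=> i; left; exact: Ha.
  apply: proper_proj => //; exact: Hweight _ _ Wu.
have Hclaim : forall s : seq 'I_k, exists rho : op D l -> R,
   [/\ (forall f', ~ is_proj f' -> 0 <= rho f'),
       (forall i, i \in s -> ~ is_proj (g i) -> S < rho (g i)) &
       W (k + l) (fun x => wsuperpos w lft x + wsuperpos rho rgt x)].
  elim=> [|i s [rho [Hr1 Hr2 Hr3]]].
    exists (fun _ => 0); split => //.
    rewrite wsuperpos0.
    have -> : (fun x => wsuperpos w lft x + 0) = wsuperpos w lft.
      by apply: functional_extensionality => x; rewrite addr0.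
    by apply: Wlift => // j; exists (lshift l j).
  case: (classic (is_proj (g i))) => Hpi.
    exists rho; split => // i0; rewrite in_cons => /orP[/eqP -> //|]; exact: Hr2.
  have [[j Hj]|[mu [Wmu mupos]]] := Hg i; first by exfalso; apply: Hpi; exists j.
  have Hmu := Hweight _ _ Wmu.
  pose t := (S + 1) / mu (g i).
  have Ht : 0 <= t by apply: divr_ge0; lra.
  have Htm : t * mu (g i) = S + 1 by rewrite /t mulfVK //; lra.
  exists (fun x => rho x + t * mu x); split.
  - move=> f' Hf'; apply: addr_ge0; first exact: Hr1.
    apply: mulr_ge0 => //; exact: weight_nonneg.
  - move=> i0; rewrite in_cons => /orP[/eqP -> _|Hi0 Hn].
      rewrite Htm; have := Hr1 _ Hpi; lra.
    have := Hr2 _ Hi0 Hn; have := mulr_ge0 Ht (weight_nonneg Hmu Hn); lra.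
  - rewrite wsuperposL.
    have -> : (fun x => wsuperpos w lft x + (wsuperpos rho rgt x + t * wsuperpos mu rgt x))
      = (fun x => (fun y => wsuperpos w lft y + wsuperpos rho rgt y) x
                 + (fun y => t * wsuperpos mu rgt y) x).
      by apply: functional_extensionality => x; rewrite addrA.
    apply: Hadd => //; apply: Hscale => //; apply: Wlift => // j.
    by exists (rshift k j).
have [rho [Hr1 Hr2 Hr3]] := Hclaim (enum 'I_k).
pose nu := fun x => wsuperpos w lft x + wsuperpos rho rgt x.
have Hlam : wsuperpos nu h = fun y => wsuperpos w g y + rho y.
  rewrite /nu wsuperposD !wsuperpos_comp Hlh Hrh wsuperpos_id //.
have Hnu := Hweight _ _ Hr3.
have Hpos : forall y, ~ is_proj y -> (exists j, y = g j) -> 0 < wsuperpos w g y + rho y.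
  move=> y Hy [j Hj].
  have Hgj : ~ is_proj (g j) by rewrite -Hj.
  have := Hr2 j (mem_enum _ _) Hgj; rewrite -Hj.
  have := wsuperpos_lb w g y; rewrite -/S; lra.
have HlamW : is_weighting (wsuperpos nu h).
  split; first by rewrite wsuperpos_sum; exact: Hnu.1.
  move=> y; rewrite Hlam => Hlt; apply: NNPP => Hy.
  case: (classic (exists j, y = g j)) => Hex.
    by have := Hpos y Hy Hex; lra.
  have Hy' : forall j, y <> g j by move=> j E; apply: Hex; exists j.
  have := wsuperpos_nonneg Hw Hy'; have := Hr1 _ Hy; lra.
have Wlam : W l (wsuperpos nu h).
  apply: Hsup => // m; rewrite /h; case: (split m) => [i|j]; first exact: Hg.
  by left; exists j.
case: (classic (is_proj (superpos f g))) => Hp; first by left.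
right; exists (wsuperpos nu h); split => //; rewrite Hlam.
case: (classic (exists j, superpos f g = g j)) => Hex; first exact: Hpos.
have Hy' : forall j, superpos f g <> g j by move=> j E; apply: Hex; exists j.
have : w f <= wsuperpos w g (superpos f g).
  rewrite /wsuperpos (bigD1 f) //= lerDl; apply: sumr_ge0 => f0 /andP[/eqP E _].
  exact: term_nonneg Hw Hy' f0 E.
have := Hr1 _ Hp; lra.
Qed.

Local Close Scope ring_scope.

Theorem lemma4 (D : finType) (HD : (1 < #|D|)%N) (W : wset D) :
  is_weighted_clone W -> is_clone (supp W).
Proof. exact: lemma4_aux. Qed.
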